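(* Let $p\in\{1,2\}$ and assume the measures $\mu^1,\dots,\mu^N$ are not all equal. Let $\pi^{ij}$ ($1\le i,j\le N$) be the plans of the pairwise algorithm, let $m^i_k\in\mathbb{R}^d$ ($i=1,\dots,N$, $k=1,\dots,n_i$) be arbitrary points, and let $\tilde\nu\coloneqq\sum_{i=1}^N\lambda_i\sum_{k=1}^{n_i}\mu^i_k\delta(m^i_k)$. Then for any optimal barycenter $\hat\nu$ (minimizer of $\Psi_p$), $$\frac{\Psi_p(\tilde\nu)}{\Psi_p(\hat\nu)}\le\frac{\sum_{i=1}^N\lambda_i\sum_{j=1}^N\lambda_j\sum_{k=1}^{n_i}\sum_{l=1}^{n_j}\pi^{ij}_{k,l}\|m^i_k-x^j_l\|^p}{\sum_{1\le i<j\le N}\lambda_i\lambda_j\mathcal{W}_p^p(\mu^i,\mu^j)}.$$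
   Context: $\|\cdot\|$ is the Euclidean norm on $\mathbb{R}^d$. For finitely supported probability measures $\mu,\nu$ on $\mathbb{R}^d$, $\mathcal{W}_p^p(\mu,\nu)\coloneqq\min_{\pi\in\Pi(\mu,\nu)}\int\|x-y\|^p\,d\pi$, with $\Pi(\mu,\nu)$ the set of couplings. Fix $N\ge2$, $\lambda\in\Delta_N\coloneqq\{\lambda\in(0,1)^N:\sum_i\lambda_i=1\}$, and discrete probability measures $\mu^i=\sum_{l=1}^{n_i}\mu^i_l\delta(x^i_l)$, $i=1,\dots,N$, with positive weights and pairwise distinct points for each $i$. $\Psi_p(\nu)\coloneqq\sum_{i=1}^N\lambda_i\mathcal{W}_p^p(\nu,\mu^i)$. Plans of the pairwise algorithm: $\pi^{ii}\coloneqq\sum_k\mu^i_k\delta(x^i_k,x^i_k)$ (so $\pi^{ii}_{k,l}=\mu^i_k$ if $l=k$, else $0$); for $i<j$, $\pi^{ij}=\sum_{k,l}\pi^{ij}_{k,l}\delta(x^i_k,x^j_l)\in\Pi(\mu^i,\mu^j)$ is an optimal plan for cost $\|x-y\|^p$; and $\pi^{ji}_{l,k}\coloneqq\pi^{ij}_{k,l}$. *)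

(* Defs.v *)
From HB Require Import structures.
From mathcomp Require Import all_boot all_order all_algebra.
From mathcomp Require Import boolp classical_sets reals.
Set Implicit Arguments. Unset Strict Implicit. Unset Printing Implicit Defensive.
Import Order.TTheory GRing.Theory Num.Theory.
Local Open Scope ring_scope.
Local Open Scope classical_set_scope.

Definition enorm {R : realType} {d : nat} (v : 'rV[R]_d) : R :=
  Num.sqrt (\sum_(i < d) (v ord0 i) ^+ 2).

(* A finitely supported measure on R^d, given by a finite index type,
   weights and atoms:  sum_{k : dI} dw k * delta(dx k). *)
Record dmeas (R : realType) (d : nat) := DMeas {
  dI : finType;
  dw : dI -> R;
  dx : dI -> 'rV[R]_d }.
Arguments DMeas {R d} dI dw dx.
Arguments dI {R d} _.
Arguments dw {R d} _ _.
Arguments dx {R d} _ _.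

Definition is_prob {R : realType} {d : nat} (nu : dmeas R d) : Prop :=
  (forall k, 0 <= dw nu k) /\ \sum_(k : dI nu) dw nu k = 1.

Definition mass {R : realType} {d : nat} (nu : dmeas R d) (y : 'rV[R]_d) : R :=
  \sum_(k : dI nu | dx nu k == y) dw nu k.

Definition meas_eq {R : realType} {d : nat} (mu nu : dmeas R d) : Prop :=
  forall y, mass mu y = mass nu y.

Definition coupling {R : realType} {d : nat} (mu nu : dmeas R d)
  (pi : dI mu -> dI nu -> R) : Prop :=
  (forall k l, 0 <= pi k l) /\
  (forall k, \sum_(l : dI nu) pi k l = dw mu k) /\
  (forall l, \sum_(k : dI mu) pi k l = dw nu l).

Definition tcost {R : realType} {d : nat} (p : nat) (mu nu : dmeas R d)
  (pi : dI mu -> dI nu -> R) : R :=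
  \sum_(k : dI mu) \sum_(l : dI nu) pi k l * enorm (dx mu k - dx nu l) ^+ p.

(* W_p^p(mu, nu) = min over couplings of the transport cost (written as the
   infimum, which is attained) *)
Definition Wpp {R : realType} {d : nat} (p : nat) (mu nu : dmeas R d) : R :=
  inf [set c | exists pi : dI mu -> dI nu -> R, coupling pi /\ c = tcost p pi].

Definition Psi {R : realType} {d N : nat} (p : nat) (lam : 'I_N -> R)
  (mus : 'I_N -> dmeas R d) (nu : dmeas R d) : R :=
  \sum_(i < N) lam i * Wpp p nu (mus i).

Definition mkmu {R : realType} {d N : nat} (n : 'I_N -> nat)
  (w : forall i, 'I_(n i) -> R) (x : forall i, 'I_(n i) -> 'rV[R]_d)
  (i : 'I_N) : dmeas R d :=
  DMeas 'I_(n i) (w i) (x i).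

Definition mixmeas {R : realType} {d N : nat} (lam : 'I_N -> R) (n : 'I_N -> nat)
  (w : forall i, 'I_(n i) -> R) (m : forall i, 'I_(n i) -> 'rV[R]_d) : dmeas R d :=
  DMeas {i : 'I_N & 'I_(n i)}
    (fun t => lam (tag t) * w (tag t) (tagged t))
    (fun t => m (tag t) (tagged t)).

(* Main.v *)
Require Import Defs.
From HB Require Import structures.
From mathcomp Require Import all_boot all_order all_algebra.
From mathcomp Require Import boolp classical_sets reals.
From mathcomp Require Import ring lra.
Import Order.TTheory GRing.Theory Num.Theory.
Local Open Scope ring_scope.
Section Enorm.
Context {R : realType} {d : nat}.
Implicit Types u v : 'rV[R]_d.

Lemma enorm_ge0 v : 0 <= enorm v.
Proof. exact: sqrtr_ge0. Qed.

Lemma enorm_sq v : enorm v ^+ 2 = \sum_(i < d) (v ord0 i) ^+ 2.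
Proof. by rewrite /enorm sqr_sqrtr // sumr_ge0 // => i _; exact: sqr_ge0. Qed.

Lemma enormN v : enorm (- v) = enorm v.
Proof. by rewrite /enorm; congr Num.sqrt; apply: eq_bigr => i _; rewrite mxE sqrrN. Qed.

Lemma enormB u v : enorm (u - v) = enorm (v - u).
Proof. by rewrite -enormN opprB. Qed.

Lemma sum3 (I : finType) (F G H : I -> R) :
  \sum_i (F i + G i - 2 * H i) = \sum_i F i + \sum_i G i - 2 * \sum_i H i.
Proof. by rewrite sumrB big_split mulr_sumr. Qed.

Lemma cauchy_schwarz (a b : 'I_d -> R) :
  (\sum_i a i * b i) ^+ 2 <= (\sum_i a i ^+ 2) * (\sum_i b i ^+ 2).
Proof.
have H : 0 <= \sum_i \sum_j (a i * b j - a j * b i) ^+ 2.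
  by apply: sumr_ge0 => i _; apply: sumr_ge0 => j _; exact: sqr_ge0.
have E1 : \sum_i \sum_j (a i * b j - a j * b i) ^+ 2 =
   \sum_i (\sum_j (a i ^+ 2 * b j ^+ 2) + \sum_j (a j ^+ 2 * b i ^+ 2)
     - 2 * \sum_j ((a i * b i) * (a j * b j))).
  apply: eq_bigr => i _; rewrite -sum3; apply: eq_bigr => j _; ring.
have X1 : \sum_i \sum_j (a i ^+ 2 * b j ^+ 2) = (\sum_i a i ^+ 2) * (\sum_i b i ^+ 2).
  by rewrite mulr_suml; apply: eq_bigr => i _; rewrite mulr_sumr.
have X2 : \sum_i \sum_j (a j ^+ 2 * b i ^+ 2) = (\sum_i a i ^+ 2) * (\sum_i b i ^+ 2).
  by rewrite exchange_big /= X1.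
have X3 : \sum_i \sum_j ((a i * b i) * (a j * b j)) = (\sum_i a i * b i) ^+ 2.
  by rewrite expr2 mulr_suml; apply: eq_bigr => i _; rewrite mulr_sumr.
move: H; rewrite E1 sum3 X1 X2 X3 => H; lra.
Qed.

Lemma enorm_triangle u v : enorm (u + v) <= enorm u + enorm v.
Proof.
have hu := enorm_ge0 u; have hv := enorm_ge0 v.
rewrite -(@ger0_norm _ (enorm u + enorm v)) ?addr_ge0 // -sqrtr_sqr.
rewrite {1}/enorm ler_sqrt ?sqr_ge0 // sqrrD !enorm_sq.
have -> : \sum_(i < d) ((u + v) ord0 i) ^+ 2 =
  \sum_(i < d) (u ord0 i) ^+ 2 + \sum_(i < d) (v ord0 i) ^+ 2
  + 2 * \sum_(i < d) (u ord0 i * v ord0 i).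
  rewrite mulr_sumr -!big_split /=; apply: eq_bigr => i _; rewrite mxE; ring.
have key : \sum_(i < d) u ord0 i * v ord0 i <= enorm u * enorm v.
  have cs := cauchy_schwarz (fun i => u ord0 i) (fun i => v ord0 i).
  rewrite (le_trans (ler_norm _)) // -sqrtr_sqr /enorm -sqrtrM ?sumr_ge0 //;
    last by move=> i _; exact: sqr_ge0.
  by rewrite ler_sqrt // mulr_ge0 // sumr_ge0 // => i _; exact: sqr_ge0.
rewrite -mulr_natr; lra.
Qed.

Lemma enorm_eq0 v : enorm v = 0 -> v = 0.
Proof.
move=> /eqP; rewrite sqrtr_eq0 => H.
have H0 : \sum_(i < d) (v ord0 i) ^+ 2 = 0.
  by apply/eqP; rewrite eq_le H sumr_ge0 // => i _; exact: sqr_ge0.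
apply/rowP => i; rewrite mxE.
have := psumr_eq0P (P := xpredT) (fun k _ => sqr_ge0 (v ord0 k)) H0; move/(_ i isT).
by move/eqP; rewrite sqrf_eq0 => /eqP.
Qed.
End Enorm.
Section Transport.
Context {R : realType} {d : nat}.
Local Open Scope classical_set_scope.

Lemma tcost_ge0 p (mu nu : dmeas R d) (pi : dI mu -> dI nu -> R) : coupling pi -> 0 <= tcost p pi.
Proof.
move=> [h0 _]; apply: sumr_ge0 => k _; apply: sumr_ge0 => l _.
by rewrite mulr_ge0 // exprn_ge0 // enorm_ge0.
Qed.

Lemma Wpp_lbound p (mu nu : dmeas R d) :
  has_lbound [set c | exists pi : dI mu -> dI nu -> R, coupling pi /\ c = tcost p pi].
Proof. by exists 0 => c [pi [hpi ->]]; exact: tcost_ge0. Qed.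

Lemma Wpp_le p (mu nu : dmeas R d) (pi : dI mu -> dI nu -> R) : coupling pi -> Wpp p mu nu <= tcost p pi.
Proof. by move=> hpi; apply: ge_inf; [exact: Wpp_lbound | exists pi]. Qed.

Lemma Wpp_approx p (mu nu : dmeas R d) (pi0 : dI mu -> dI nu -> R) : coupling pi0 ->
  forall e, 0 < e -> exists pi : dI mu -> dI nu -> R, coupling pi /\ tcost p pi <= Wpp p mu nu + e.
Proof.
move=> h0 e he.
have [c [pi [hpi ->]] hc] := inf_adherent he (conj (ex_intro _ _ (ex_intro _ pi0 (conj h0 erefl))) (Wpp_lbound p mu nu)).
by exists pi; split => //; exact: ltW.
Qed.
End Transport.
Section Key.
Context {R : realType} {d : nat}.

Lemma key_scalar {T : finType} {be : T -> R} (u : T -> R) :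
  \sum_s \sum_t be s * be t * (u t - u s) ^+ 2 <=
  2 * (\sum_s be s) * \sum_s be s * u s ^+ 2.
Proof.
have E1 : \sum_s \sum_t be s * be t * (u t - u s) ^+ 2 =
   \sum_s (\sum_t (be s * (be t * u t ^+ 2)) + \sum_t (be t * (be s * u s ^+ 2))
     - 2 * \sum_t ((be s * u s) * (be t * u t))).
  apply: eq_bigr => i _; rewrite -sum3; apply: eq_bigr => j _; ring.
have X1 : \sum_s \sum_t (be s * (be t * u t ^+ 2)) = (\sum_s be s) * \sum_s be s * u s ^+ 2.
  by rewrite mulr_suml; apply: eq_bigr => i _; rewrite mulr_sumr.
have X2 : \sum_s \sum_t (be t * (be s * u s ^+ 2)) = (\sum_s be s) * \sum_s be s * u s ^+ 2.
  by rewrite exchange_big /= X1.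
have X3 : \sum_s \sum_t ((be s * u s) * (be t * u t)) = (\sum_s be s * u s) ^+ 2.
  by rewrite expr2 mulr_suml; apply: eq_bigr => i _; rewrite mulr_sumr.
rewrite E1 sum3 X1 X2 X3.
have := sqr_ge0 (\sum_s be s * u s); lra.
Qed.

Lemma key1 (T : finType) (be : T -> R) (b : T -> 'rV[R]_d) (y : 'rV[R]_d) :
  (forall s, 0 <= be s) ->
  \sum_s \sum_t be s * be t * enorm (b s - b t) ^+ 1 <=
  2 * (\sum_s be s) * \sum_s be s * enorm (y - b s) ^+ 1.
Proof.
move=> hb.
apply: (@le_trans _ _ (\sum_s \sum_t (be s * enorm (y - b s) * be t + be s * (be t * enorm (y - b t))))).
  apply: ler_sum => s _; apply: ler_sum => t _.
  have tri : enorm (b s - b t) <= enorm (y - b s) + enorm (y - b t).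
    have -> : b s - b t = (b s - y) + (y - b t) by rewrite addrA subrK.
    by rewrite (le_trans (enorm_triangle _ _)) // enormB.
  rewrite [X in _ <= X](_ : _ = be s * be t * (enorm (y - b s) + enorm (y - b t))); last by ring.
  by rewrite expr1 ler_wpM2l // mulr_ge0.
under eq_bigr do rewrite big_split /=.
rewrite big_split /=.
under eq_bigr do rewrite -mulr_sumr.
under [X in _ + X <= _]eq_bigr do rewrite -mulr_sumr.
rewrite -mulr_suml -mulr_suml.
under [X in _ <= _ * X]eq_bigr do rewrite expr1.
set V := \sum_s be s; set C := \sum_s be s * enorm (y - b s).
lra.
Qed.

Lemma key2 (T : finType) (be : T -> R) (b : T -> 'rV[R]_d) (y : 'rV[R]_d) :
  (forall s, 0 <= be s) ->
  \sum_s \sum_t be s * be t * enorm (b s - b t) ^+ 2 <=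
  2 * (\sum_s be s) * \sum_s be s * enorm (y - b s) ^+ 2.
Proof.
move=> hb.
have -> : \sum_s \sum_t be s * be t * enorm (b s - b t) ^+ 2 =
   \sum_(c < d) \sum_s \sum_t be s * be t * ((y ord0 c - b t ord0 c) - (y ord0 c - b s ord0 c)) ^+ 2.
  rewrite [RHS]exchange_big /=; apply: eq_bigr => s _.
  rewrite [RHS]exchange_big /=; apply: eq_bigr => t _.
  rewrite enorm_sq mulr_sumr; apply: eq_bigr => c _; rewrite !mxE; congr (_ * _).
  congr (_ ^+ 2); ring.
have -> : \sum_s be s * enorm (y - b s) ^+ 2 =
   \sum_(c < d) \sum_s be s * (y ord0 c - b s ord0 c) ^+ 2.
  rewrite [RHS]exchange_big /=; apply: eq_bigr => s _.
  rewrite enorm_sq mulr_sumr; apply: eq_bigr => c _; rewrite !mxE //.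
rewrite mulr_sumr; apply: ler_sum => c _.
exact: (key_scalar (fun s => y ord0 c - b s ord0 c)).
Qed.
End Key.
Section Gen.
Context {R : realType} {d : nat}.

Lemma sig_sum {I : finType} {J : I -> finType} (F : forall i, J i -> R) :
  \sum_(t : {i : I & J i}) F (tag t) (tagged t) = \sum_i \sum_(k : J i) F i k.
Proof. by rewrite (sig_big_dep (fun _ => true) (fun _ _ => true) F). Qed.

Lemma key {p : nat} (hp : (p == 1)%N || (p == 2)%N)
  (T : finType) (be : T -> R) (b : T -> 'rV[R]_d) (y : 'rV[R]_d) :
  (forall s, 0 <= be s) ->
  \sum_s \sum_t be s * be t * enorm (b s - b t) ^+ p <=
  2 * (\sum_s be s) * \sum_s be s * enorm (y - b s) ^+ p.
Proof. by case/orP: hp => /eqP ->; [exact: key1 | exact: key2]. Qed.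

Lemma key_nested (p : nat) (hp : (p == 1)%N || (p == 2)%N)
  (I : finType) (J : I -> finType) (be : forall i, J i -> R)
  (b : forall i, J i -> 'rV[R]_d) (y : 'rV[R]_d) :
  (forall i k, 0 <= be i k) ->
  \sum_i \sum_(k : J i) \sum_j \sum_(l : J j) be i k * be j l * enorm (b i k - b j l) ^+ p <=
  2 * (\sum_i \sum_(k : J i) be i k) * \sum_i \sum_(k : J i) be i k * enorm (y - b i k) ^+ p.
Proof.
move=> hb.
have := key hp _ (fun s : {i : I & J i} => be (tag s) (tagged s)) (fun s => b (tag s) (tagged s)) y
  (fun s => hb _ _).
rewrite (sig_sum be) (sig_sum (fun i k => be i k * enorm (y - b i k) ^+ p)).
under eq_bigr => s _ do rewrite (sig_sum (fun j l => be (tag s) (tagged s) * be j l * enorm (b (tag s) (tagged s) - b j l) ^+ p)).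
by rewrite (sig_sum (fun i k => \sum_j \sum_(l : J j) be i k * be j l * enorm (b i k - b j l) ^+ p)).
Qed.

Lemma half_sum (N : nat) (T : 'I_N -> 'I_N -> R) :
  (forall i j, 0 <= T i j) -> (forall i j, T i j = T j i) ->
  2 * \sum_(i < N) \sum_(j < N | (i < j)%N) T i j <= \sum_(i < N) \sum_(j < N) T i j.
Proof.
move=> h0 hs.
have E : \sum_(i < N) \sum_(j < N | (j < i)%N) T i j = \sum_(i < N) \sum_(j < N | (i < j)%N) T i j.
  transitivity (\sum_(i < N) \sum_(j < N) (if (j < i)%N then T i j else 0)).
    by apply: eq_bigr => i _; rewrite big_mkcond.
  rewrite exchange_big /=; apply: eq_bigr => i _; rewrite [RHS]big_mkcond.
  by apply: eq_bigr => j _; rewrite hs.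
have F : \sum_(i < N) \sum_(j < N | (i < j)%N) T i j + \sum_(i < N) \sum_(j < N | (j < i)%N) T i j
    <= \sum_(i < N) \sum_(j < N) T i j.
  rewrite -big_split /=; apply: ler_sum => i _.
  rewrite [X in _ <= X](bigID (fun j : 'I_N => (i < j)%N) predT) /= lerD2l.
  rewrite [X in _ <= X](bigID (fun j : 'I_N => (j < i)%N) (fun j : 'I_N => ~~ (i < j)%N)) /=.
  rewrite -[X in X <= _]addr0; apply: lerD; last by apply: sumr_ge0.
  rewrite le_eqVlt; apply/orP; left; apply/eqP; apply: eq_bigl => j.
  by case: ltngtP.
rewrite E in F; lra.
Qed.
End Gen.
Lemma final_ineq {R : realType} (A B NUM D : R) :
  A <= NUM -> 0 < D -> D <= B -> 0 <= NUM -> A / B <= NUM / D.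
Proof.
move=> hA hD hDB hN; have hB : 0 < B := lt_le_trans hD hDB.
rewrite ler_pdivrMr // mulrAC ler_pdivlMr //.
apply: (le_trans (ler_wpM2r (ltW hD) hA)).
by rewrite ler_wpM2l.
Qed.
Theorem mainTheorem6 (R : realType) (d N p : nat)
  (hp : (p == 1)%N || (p == 2)%N) (hN : (2 <= N)%N)
  (lam : 'I_N -> R) (hlam_pos : forall i, 0 < lam i)
  (hlam_sum : \sum_(i < N) lam i = 1)
  (n : 'I_N -> nat)
  (w : forall i, 'I_(n i) -> R) (x : forall i, 'I_(n i) -> 'rV[R]_d)
  (hw_pos : forall i k, 0 < w i k)
  (hw_sum : forall i, \sum_(k < n i) w i k = 1)
  (hx_inj : forall i, injective (x i))
  (hneq : exists i j, ~ meas_eq (mkmu w x i) (mkmu w x j))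
  (pi : forall i j : 'I_N, 'I_(n i) -> 'I_(n j) -> R)
  (hpi_diag : forall i (k l : 'I_(n i)), pi i i k l = if k == l then w i k else 0)
  (hpi_opt : forall i j : 'I_N, (i < j)%N ->
      @coupling R d (mkmu w x i) (mkmu w x j) (pi i j) /\
      @tcost R d p (mkmu w x i) (mkmu w x j) (pi i j) = Wpp p (mkmu w x i) (mkmu w x j))
  (hpi_sym : forall (i j : 'I_N) (k : 'I_(n i)) (l : 'I_(n j)), pi j i l k = pi i j k l)
  (m : forall i, 'I_(n i) -> 'rV[R]_d)
  (nuhat : dmeas R d)
  (hnuhat : is_prob nuhat /\
     forall nu : dmeas R d, is_prob nu ->
       Psi p lam (mkmu w x) nuhat <= Psi p lam (mkmu w x) nu) :
  Psi p lam (mkmu w x) (mixmeas lam w m) / Psi p lam (mkmu w x) nuhat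
  <= (\sum_(i < N) lam i * \sum_(j < N) lam j *
        \sum_(k < n i) \sum_(l < n j) pi i j k l * enorm (m i k - x j l) ^+ p)
     / (\sum_(i < N) \sum_(j < N | (i < j)%N) lam i * lam j * Wpp p (mkmu w x i) (mkmu w x j)).
Proof.
have [hprob _] := hnuhat.
have pi_ge0 : forall i j k l, 0 <= pi i j k l.
  move=> i j k l; case: (ltngtP i j) => [hij|hji|eij].
  - by have [[h _] _] := hpi_opt i j hij; exact: h.
  - by rewrite -hpi_sym; have [[h _] _] := hpi_opt j i hji; exact: h.
  - have eij' : i = j by apply: val_inj.
    subst j; rewrite hpi_diag; case: eqP => _ //; exact: ltW (hw_pos _ _).
have pi_row : forall i j k, \sum_l pi i j k l = w i k.
  move=> i j k; case: (ltngtP i j) => [hij|hji|eij].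
  - by have [[_ [h _]] _] := hpi_opt i j hij; exact: h.
  - under eq_bigr do rewrite -hpi_sym.
    by have [[_ [_ h]] _] := hpi_opt j i hji; exact: h.
  - have eij' : i = j by apply: val_inj.
    subst j; under eq_bigr do rewrite hpi_diag.
    rewrite (bigD1 k) //= eqxx big1 ?addr0 // => l; rewrite eq_sym => /negbTE ->.
    by [].
have pi_col : forall i j l, \sum_k pi i j k l = w j l.
  by move=> i j l; under eq_bigr do rewrite -hpi_sym; exact: pi_row.
apply: final_ineq.
- rewrite /Psi.
  pose gam (j : 'I_N) (t : {i : 'I_N & 'I_(n i)}) (l : 'I_(n j)) :=
    lam (tag t) * pi (tag t) j (tagged t) l.
  have cg : forall j, @coupling R d (mixmeas lam w m) (mkmu w x j) (gam j).
    move=> j; split; [|split].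
    - by move=> t l; rewrite /gam mulr_ge0 // ltW.
    - by move=> t; rewrite /gam /= -mulr_sumr pi_row.
    - move=> l /=; rewrite /gam (sig_sum (fun i k => lam i * pi i j k l)).
      under eq_bigr do rewrite -mulr_sumr pi_col.
      by rewrite -mulr_suml hlam_sum mul1r.
  apply: (@le_trans _ _ (\sum_(j < N) lam j * @tcost R d p (mixmeas lam w m) (mkmu w x j) (gam j))).
    apply: ler_sum => j _; rewrite ler_pM2l //; exact: Wpp_le (cg j).
  rewrite le_eqVlt; apply/orP; left; apply/eqP.
  transitivity (\sum_(j < N) \sum_(i < N) lam i * (lam j *
        \sum_(k < n i) \sum_(l < n j) pi i j k l * enorm (m i k - x j l) ^+ p)).
    apply: eq_bigr => j _; rewrite /tcost /gam /=.
    rewrite (sig_sum (fun i k => \sum_(l < n j) lam i * pi i j k l * enorm (m i k - x j l) ^+ p)).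
    rewrite mulr_sumr; apply: eq_bigr => i _.
    rewrite !mulr_sumr; apply: eq_bigr => k _; rewrite !mulr_sumr; apply: eq_bigr => l _.
    ring.
  by rewrite exchange_big; apply: eq_bigr => i _; rewrite mulr_sumr.
- have Wt : forall i j : 'I_N, (i < j)%N ->
      Wpp p (mkmu w x i) (mkmu w x j) = @tcost R d p (mkmu w x i) (mkmu w x j) (pi i j).
    by move=> i j hij; have [_ ->] := hpi_opt i j hij.
  have Wge0 : forall i j : 'I_N, (i < j)%N -> 0 <= Wpp p (mkmu w x i) (mkmu w x j).
    by move=> i j hij; rewrite Wt //; apply: tcost_ge0; have [h _] := hpi_opt i j hij.
  have meq : forall i j : 'I_N, (i < j)%N -> Wpp p (mkmu w x i) (mkmu w x j) = 0 ->
      meas_eq (mkmu w x i) (mkmu w x j).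
    move=> i j hij; rewrite Wt // /tcost /= => h0 y.
    have Fge0 : forall k : 'I_(n i), xpredT k ->
        0 <= \sum_(l < n j) pi i j k l * enorm (x i k - x j l) ^+ p.
      by move=> k _; apply: sumr_ge0 => l _; rewrite mulr_ge0 ?exprn_ge0 ?enorm_ge0.
    have h1 := psumr_eq0P Fge0 h0.
    have hz : forall k l, pi i j k l != 0 -> x i k = x j l.
      move=> k l hne.
      have Gge0 : forall l : 'I_(n j), xpredT l ->
          0 <= pi i j k l * enorm (x i k - x j l) ^+ p.
        by move=> l' _; rewrite mulr_ge0 ?exprn_ge0 ?enorm_ge0.
      have h2 := psumr_eq0P Gge0 (h1 k isT).
      move: (h2 l isT) => /eqP; rewrite mulf_eq0 (negbTE hne) /= expf_eq0 => /andP [_ /eqP].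
      by move/enorm_eq0/eqP; rewrite subr_eq0 => /eqP.
    rewrite /mass /=.
    transitivity (\sum_(k < n i) \sum_(l < n j) (if x i k == y then pi i j k l else 0)).
      rewrite big_mkcond; apply: eq_bigr => k _; case: eqP => _; first by rewrite pi_row.
      by rewrite big1.
    transitivity (\sum_(l < n j) \sum_(k < n i) (if x j l == y then pi i j k l else 0)).
      rewrite exchange_big; apply: eq_bigr => l _; apply: eq_bigr => k _.
      by case: (eqVneq (pi i j k l) 0) => [->|/hz ->]; rewrite ?if_same.
    rewrite [RHS]big_mkcond; apply: eq_bigr => l _; case: eqP => _; first by rewrite pi_col.
    by rewrite big1.
  have Inge0 : forall i : 'I_N, xpredT i -> 0 <= \sum_(j < N | (i < j)%N)
      lam i * lam j * Wpp p (mkmu w x i) (mkmu w x j).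
    move=> i _; apply: sumr_ge0 => j hij; apply: mulr_ge0; last exact: Wge0.
    by apply: mulr_ge0; apply: ltW.
  rewrite lt_def sumr_ge0 ?andbT; last exact: Inge0.
  apply/eqP => D0.
  have h1 := psumr_eq0P Inge0 D0.
  have allW : forall i j : 'I_N, (i < j)%N -> Wpp p (mkmu w x i) (mkmu w x j) = 0.
    move=> i j hij.
    have Tge0 : forall j : 'I_N, (i < j)%N -> 0 <= lam i * lam j * Wpp p (mkmu w x i) (mkmu w x j).
      move=> j' hij'; apply: mulr_ge0; last exact: Wge0.
      by apply: mulr_ge0; apply: ltW.
    have h3 := psumr_eq0P Tge0 (h1 i isT); move: (h3 j hij) => /eqP.
    by rewrite !mulf_eq0 !(gt_eqF (hlam_pos _)) /= => /eqP.
  case: hneq => i [j hne]; apply: hne.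
  case: (ltngtP i j) => [hij|hji|eij].
  + exact: meq (allW i j hij).
  + by move=> y; symmetry; exact: meq (allW j i hji) y.
  + by rewrite (val_inj eij) => y.
- have [hv0 hv1] := hprob.
  apply/ler_addgt0Pr => e he.
  have ex_gam : forall i : 'I_N, exists g : dI nuhat -> 'I_(n i) -> R,
      @coupling R d nuhat (mkmu w x i) g /\
      @tcost R d p nuhat (mkmu w x i) g <= Wpp p nuhat (mkmu w x i) + e.
    move=> i; apply: (@Wpp_approx R d p nuhat (mkmu w x i) (fun z k => dw nuhat z * w i k) _ e he).
    split; [|split].
    - by move=> z k; rewrite mulr_ge0 // ltW.
    - by move=> z /=; rewrite -mulr_sumr hw_sum mulr1.
    - by move=> k /=; rewrite -mulr_suml hv1 mul1r.
  pose gam i := sval (cid (ex_gam i)).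
  have hg : forall i, @coupling R d nuhat (mkmu w x i) (gam i) /\
      @tcost R d p nuhat (mkmu w x i) (gam i) <= Wpp p nuhat (mkmu w x i) + e.
    by move=> i; exact: (svalP (cid (ex_gam i))).
  have gge0 : forall i z k, 0 <= gam i z k by move=> i z k; have [[h _] _] := hg i; exact: h.
  have row : forall i z, \sum_k gam i z k = dw nuhat z.
    by move=> i z; have [[_ [h _]] _] := hg i; exact: h.
  have col : forall i k, \sum_z gam i z k = w i k.
    by move=> i k; have [[_ [_ h]] _] := hg i; exact: h.
  have gz : forall i z k, dw nuhat z = 0 -> gam i z k = 0.
    move=> i z k hz; have h := row i z; rewrite hz in h.
    have Fge0 : forall k : 'I_(n i), xpredT k -> 0 <= gam i z k by move=> k' _; exact: gge0.
    have h2 := psumr_eq0P Fge0 h; exact: h2 k isT.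
  have gmul : forall i z k, gam i z k * dw nuhat z / dw nuhat z = gam i z k.
    move=> i z k; case: (eqVneq (dw nuhat z) 0) => [hz|hz].
      by rewrite (gz _ _ _ hz) !mul0r.
    by rewrite mulfK.
  pose G (i j : 'I_N) := \sum_(k < n i) \sum_(l < n j)
    (\sum_z gam i z k * gam j z l / dw nuhat z) * enorm (x i k - x j l) ^+ p.
  have Gge0 : forall i j, 0 <= G i j.
    move=> i j; apply: sumr_ge0 => k _; apply: sumr_ge0 => l _.
    rewrite mulr_ge0 ?exprn_ge0 ?enorm_ge0 //.
    by apply: sumr_ge0 => z _; rewrite divr_ge0 ?mulr_ge0.
  have Gsym : forall i j, G i j = G j i.
    move=> i j; rewrite /G exchange_big; apply: eq_bigr => l _; apply: eq_bigr => k _.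
    rewrite enormB; congr (_ * _); apply: eq_bigr => z _.
    by rewrite [gam i z k * _]mulrC.
  have WG : forall i j : 'I_N, Wpp p (mkmu w x i) (mkmu w x j) <= G i j.
    move=> i j.
    have hc : @coupling R d (mkmu w x i) (mkmu w x j)
        (fun k l => \sum_z gam i z k * gam j z l / dw nuhat z).
      split; [|split].
      - move=> k l; apply: sumr_ge0 => z _; by rewrite divr_ge0 ?mulr_ge0.
      - move=> k /=; rewrite exchange_big /=.
        under eq_bigr => z _ do rewrite -mulr_suml -mulr_sumr row gmul.
        exact: col.
      - move=> l /=; rewrite exchange_big /=.
        under eq_bigr => z _ do rewrite -mulr_suml -mulr_suml row [_ * gam j z l]mulrC gmul.
        exact: col.
    exact: (Wpp_le p _ _ _ hc).
  have H1 : \sum_(i < N) \sum_(j < N | (i < j)%N)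
      lam i * lam j * Wpp p (mkmu w x i) (mkmu w x j) <=
      \sum_(i < N) \sum_(j < N | (i < j)%N) lam i * lam j * G i j.
    apply: ler_sum => i _; apply: ler_sum => j _; rewrite ler_wpM2l //.
    by apply: mulr_ge0; apply: ltW.
  have H2 := @half_sum R N (fun i j => lam i * lam j * G i j)
    (fun i j => mulr_ge0 (mulr_ge0 (ltW (hlam_pos i)) (ltW (hlam_pos j))) (Gge0 i j))
    (fun i j => ltac:(by rewrite /= [lam i * _]mulrC Gsym)).
  have H4 : \sum_(i < N) lam i * @tcost R d p nuhat (mkmu w x i) (gam i) <=
      Psi p lam (mkmu w x) nuhat + e.
    apply: (@le_trans _ _ (\sum_(i < N) lam i * (Wpp p nuhat (mkmu w x i) + e))).
      apply: ler_sum => i _; rewrite ler_pM2l //; by have [_ h] := hg i.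
    by rewrite /Psi; under eq_bigr do rewrite mulrDr; rewrite big_split /= -mulr_suml hlam_sum mul1r.
  have H3 : \sum_(i < N) \sum_(j < N) lam i * lam j * G i j <=
      2 * \sum_(i < N) lam i * @tcost R d p nuhat (mkmu w x i) (gam i).
    have EL : \sum_(i < N) \sum_(j < N) lam i * lam j * G i j =
        \sum_z (dw nuhat z)^-1 * \sum_(i < N) \sum_(k < n i) \sum_(j < N) \sum_(l < n j)
          (lam i * gam i z k) * (lam j * gam j z l) * enorm (x i k - x j l) ^+ p.
      have E0 : forall z, (dw nuhat z)^-1 * \sum_(i < N) \sum_(k < n i) \sum_(j < N) \sum_(l < n j)
          (lam i * gam i z k) * (lam j * gam j z l) * enorm (x i k - x j l) ^+ p =
          \sum_(i < N) \sum_(k < n i) \sum_(j < N) \sum_(l < n j) (dw nuhat z)^-1 *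
          ((lam i * gam i z k) * (lam j * gam j z l) * enorm (x i k - x j l) ^+ p).
        move=> z; rewrite mulr_sumr; apply: eq_bigr => i _; rewrite mulr_sumr.
        apply: eq_bigr => k _; rewrite mulr_sumr; apply: eq_bigr => j _; by rewrite mulr_sumr.
      under [RHS]eq_bigr do rewrite E0.
      rewrite [RHS]exchange_big /=; apply: eq_bigr => i _.
      rewrite [RHS]exchange_big /=.
      under [RHS]eq_bigr => k _ do rewrite exchange_big /=.
      rewrite [RHS]exchange_big /=; apply: eq_bigr => j _.
      rewrite /G mulr_sumr; apply: eq_bigr => k _.
      rewrite [RHS]exchange_big /= mulr_sumr; apply: eq_bigr => l _.
      rewrite mulr_suml mulr_sumr; apply: eq_bigr => z _.
      ring.
    have ER : \sum_(i < N) lam i * @tcost R d p nuhat (mkmu w x i) (gam i) =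
        \sum_z \sum_(i < N) \sum_(k < n i) (lam i * gam i z k) * enorm (dx nuhat z - x i k) ^+ p.
      rewrite [RHS]exchange_big; apply: eq_bigr => i _; rewrite /tcost /= mulr_sumr.
      apply: eq_bigr => z _; rewrite mulr_sumr; apply: eq_bigr => k _; by rewrite mulrA.
    have Sb : forall z, \sum_(i < N) \sum_(k < n i) lam i * gam i z k = dw nuhat z.
      move=> z; under eq_bigr do rewrite -mulr_sumr row.
      by rewrite -mulr_suml hlam_sum mul1r.
    rewrite EL ER mulr_sumr; apply: ler_sum => z _.
    have K := @key_nested R d p hp _ _ (fun i k => lam i * gam i z k) x (dx nuhat z)
      (fun i k => mulr_ge0 (ltW (hlam_pos i)) (gge0 i z k)).
    rewrite /= Sb in K.
    have Rge0 : 0 <= \sum_(i < N) \sum_(k < n i) (lam i * gam i z k) * enorm (dx nuhat z - x i k) ^+ p.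
      apply: sumr_ge0 => i _; apply: sumr_ge0 => k _.
      by rewrite mulr_ge0 ?exprn_ge0 ?enorm_ge0 // mulr_ge0 // ltW.
    case: (eqVneq (dw nuhat z) 0) => [hz|hz].
      by rewrite hz invr0 mul0r mulr_ge0.
    have vpos : 0 < dw nuhat z by rewrite lt_def hz hv0.
    rewrite ler_pdivrMl // mulrA [dw nuhat z * 2]mulrC.
    exact: K.
  simpl in H2; lra.
- apply: sumr_ge0 => i _; apply: mulr_ge0; first exact: ltW.
  apply: sumr_ge0 => j _; apply: mulr_ge0; first exact: ltW.
  apply: sumr_ge0 => k _; apply: sumr_ge0 => l _.
  by rewrite mulr_ge0 ?exprn_ge0 ?enorm_ge0.
Qed.
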